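(* If $\mu>-\frac{3}{2}$ and $|\mu|>|\nu|$, then $x\mapsto \mathbf{L}_\mu(x)/\tilde{t}_{\mu,\nu}(x)$ is strictly increasing on $(0,\infty)$. If $\mu>-\frac{3}{2}$ and $|\mu|<|\nu|<\mu+3$, then $x\mapsto \mathbf{L}_\mu(x)/\tilde{t}_{\mu,\nu}(x)$ is strictly decreasing on $(0,\infty)$.
   Context: For real $\mu,\nu$ the (normalized) modified Lommel function of the first kind is $$\tilde{t}_{\mu,\nu}(x)=\sum_{k=0}^\infty\frac{(\frac{1}{2}x)^{\mu+2k+1}}{\Gamma\big(k+\frac{\mu-\nu+3}{2}\big)\Gamma\big(k+\frac{\mu+\nu+3}{2}\big)},\quad x>0,$$ and the modified Struve function of the first kind is $$\mathbf{L}_\mu(x)=\sum_{k=0}^\infty\frac{(\frac{1}{2}x)^{2k+\mu+1}}{\Gamma(k+\frac{3}{2})\Gamma(k+\mu+\frac{3}{2})}.$$ *)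

(* Defs.v *)
From Stdlib Require Import Reals.
From Coquelicot Require Import Coquelicot.
Open Scope R_scope.

(* Euler's Gamma function for s > 0: Gamma s = int_0^oo t^(s-1) e^(-t) dt
   (improper Riemann integral; only used at positive arguments). *)
Definition Gamma (s : R) : R :=
  RInt_gen (fun t => Rpower t (s - 1) * exp (- t))
           (at_right 0) (Rbar_locally p_infty).

Definition lommel_t (mu nu x : R) : R :=
  Series (fun k : nat =>
    Rpower (x / 2) (mu + 2 * INR k + 1)
    / (Gamma (INR k + (mu - nu + 3) / 2) * Gamma (INR k + (mu + nu + 3) / 2))).

Definition struve_L (mu x : R) : R :=
  Series (fun k : nat =>
    Rpower (x / 2) (2 * INR k + mu + 1)
    / (Gamma (INR k + 3 / 2) * Gamma (INR k + mu + 3 / 2))).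

(* Main.v *)
Require Import Defs.
From Stdlib Require Import Reals Lra Lia.
From Coquelicot Require Import Coquelicot.
Open Scope R_scope.

Lemma exp_big (c : R) : exists m : nat, c < exp (INR m).
Proof.
  destruct (INR_unbounded c) as [m Hm]. exists m.
  pose proof (exp_ineq1_le (INR m)). lra.
Qed.

Lemma ex_RInt_pos (f : R -> R) a b :
  (forall t, 0 < t -> continuous f t) -> 0 < a -> 0 < b -> ex_RInt f a b.
Proof.
  intros Hc Ha Hb. apply (ex_RInt_continuous (V:=R_CompleteNormedModule)). intros z Hz. apply Hc.
  destruct Hz as [Hz _]. eapply Rlt_le_trans; [|exact Hz].
  unfold Rmin; destruct Rle_dec; lra.
Qed.

Lemma RInt_mono (f : R -> R) a' a b b' :
  (forall t, 0 < t -> continuous f t) -> (forall t, 0 < t -> 0 <= f t) ->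
  0 < a' -> a' <= a -> a <= b -> b <= b' -> RInt f a b <= RInt f a' b'.
Proof.
  intros Hc Hp H1 H2 H3 H4.
  assert (E1 := RInt_Chasles (V:=R_CompleteNormedModule) f a' a b (ex_RInt_pos f a' a Hc ltac:(lra) ltac:(lra))
                 (ex_RInt_pos f a b Hc ltac:(lra) ltac:(lra))).
  assert (E2 := RInt_Chasles (V:=R_CompleteNormedModule) f a' b b' (ex_RInt_pos f a' b Hc ltac:(lra) ltac:(lra))
                 (ex_RInt_pos f b b' Hc ltac:(lra) ltac:(lra))).
  change plus with Rplus in E1, E2. simpl in E1, E2.
  assert (0 <= RInt f a' a).
  { apply RInt_ge_0; auto. apply ex_RInt_pos; auto; lra. intros; apply Hp; lra. }
  assert (0 <= RInt f b b').
  { apply RInt_ge_0; auto. apply ex_RInt_pos; auto; lra. intros; apply Hp; lra. }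
  lra.
Qed.

Definition an (n : nat) := exp (- INR n).
Definition bn (n : nat) := exp (INR n).

Lemma an_pos n : 0 < an n. Proof. apply exp_pos. Qed.
Lemma an_le1 n : an n <= 1.
Proof. unfold an. rewrite <- exp_0. destruct (pos_INR n).
  left; apply exp_increasing; lra. rewrite <- H; right; f_equal; lra. Qed.
Lemma bn_ge1 n : 1 <= bn n.
Proof. unfold bn. rewrite <- exp_0. destruct (pos_INR n).
  left; apply exp_increasing; lra. rewrite <- H; right; f_equal. Qed.
Lemma an_S n : an (S n) <= an n.
Proof. unfold an. rewrite S_INR. left; apply exp_increasing; lra. Qed.
Lemma bn_S n : bn n <= bn (S n).
Proof. unfold bn. rewrite S_INR. left; apply exp_increasing; lra. Qed.

Lemma gen_limit (f : R -> R) (M : R) :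
  (forall t, 0 < t -> continuous f t) -> (forall t, 0 < t -> 0 <= f t) ->
  (forall n, RInt f (an n) (bn n) <= M) ->
  is_RInt_gen f (at_right 0) (Rbar_locally p_infty)
     (real (Lim_seq (fun n => RInt f (an n) (bn n)))) /\
  (forall n, RInt f (an n) (bn n) <= real (Lim_seq (fun n => RInt f (an n) (bn n)))) /\
  is_lim_seq (fun n => RInt f (an n) (bn n)) (real (Lim_seq (fun n => RInt f (an n) (bn n)))).
Proof.
  intros Hc Hp HM.
  set (u := fun n => RInt f (an n) (bn n)).
  assert (Hinc : forall n, u n <= u (S n)).
  { intro n. unfold u. apply RInt_mono; auto. apply an_pos. apply an_S.
    pose proof (an_le1 n); pose proof (bn_ge1 n); lra. apply bn_S. }
  assert (Hl : is_lim_seq u (real (Lim_seq u))).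
  { assert (Hex : ex_finite_lim_seq u) by (apply ex_finite_lim_seq_incr with M; auto).
    destruct Hex as [l Hl]. rewrite (is_lim_seq_unique _ _ Hl). exact Hl. }
  set (l := real (Lim_seq u)) in *.
  assert (Hle : forall n, u n <= l) by (apply is_lim_seq_incr_compare; auto).
  split; [|split; [exact Hle|exact Hl]].
  intros P [eps HP].
  apply is_lim_seq_spec in Hl.
  destruct (Hl eps) as [N HN].
  apply Filter_prod with (fun a => 0 < a /\ a < an N) (fun b => bn N < b).
  - exists (mkposreal _ (an_pos N)). intros y Hy Hy0. split; auto.
    unfold ball in Hy; simpl in Hy; unfold AbsRing_ball, abs, minus, plus, opp in Hy;
    simpl in Hy. rewrite Ropp_0, Rplus_0_r in Hy. apply Rabs_def2 in Hy. lra.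
  - exists (bn N). auto.
  - intros x y Hx Hy. simpl.
    destruct Hx as [Hx0 Hx].
    pose proof (an_le1 N); pose proof (bn_ge1 N).
    exists (RInt f x y). split.
    { apply (RInt_correct (V:=R_CompleteNormedModule)). apply ex_RInt_pos; auto; lra. }
    apply HP.
    destruct (exp_big (Rmax y (/ x))) as [m Hm].
    assert (Hm1 : y <= bn m).
    { unfold bn. left. eapply Rle_lt_trans; [apply Rmax_l|exact Hm]. }
    assert (Hm2 : an m <= x).
    { unfold an. rewrite exp_Ropp. left.
      assert (/ x < exp (INR m)) by (eapply Rle_lt_trans; [apply Rmax_r|exact Hm]).
      rewrite <- (Rinv_inv x). apply Rinv_lt_contravar; auto.
      apply Rmult_lt_0_compat; auto. apply Rinv_0_lt_compat; auto. apply exp_pos. }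
    assert (H1 : u N <= RInt f x y).
    { apply RInt_mono; auto; lra. }
    assert (H2 : RInt f x y <= u m).
    { apply RInt_mono; auto; try lra. apply an_pos. }
    specialize (HN N (Nat.le_refl N)). pose proof (Hle m).
    unfold ball; simpl; unfold AbsRing_ball, abs, minus, plus, opp; simpl.
    apply Rabs_def1; apply Rabs_def2 in HN; lra.
Qed.

Definition gf (s t : R) := Rpower t (s - 1) * exp (- t).

Lemma exp_le' x y : x <= y -> exp x <= exp y.
Proof. intros [H|H]. left; apply exp_increasing; auto. subst; lra. Qed.

Lemma gf_eq s t : gf s t = exp ((s - 1) * ln t - t).
Proof. unfold gf, Rpower. rewrite <- exp_plus. reflexivity. Qed.

Lemma gf_pos s t : 0 < gf s t.
Proof. rewrite gf_eq. apply exp_pos. Qed.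

Lemma gf_cont s t : 0 < t -> continuous (gf s) t.
Proof. intros Ht. apply (ex_derive_continuous (K:=R_AbsRing) (V:=R_NormedModule)).
  unfold gf, Rpower. auto_derive. lra. Qed.

Lemma pow_m1 s t : 0 < t -> exp ((s - 1) * ln t) = exp (s * ln t) / t.
Proof. intros Ht. replace ((s - 1) * ln t) with (s * ln t + - ln t) by ring.
  rewrite exp_plus, exp_Ropp, exp_ln; auto. Qed.

Lemma ln_ge0 t : 1 <= t -> 0 <= ln t.
Proof. intros H. rewrite <- ln_1. apply ln_le; lra. Qed.

Lemma tail_bound s : exists K, 0 < K /\ forall t, 1 <= t -> gf s t <= K * exp (- t / 2).
Proof.
  set (c := Rabs (s - 1)). set (m := 2 * c + 2).
  assert (Hc : 0 <= c) by apply Rabs_pos.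
  assert (Hm : 0 < m) by (unfold m; lra).
  exists (exp (c * ln m)). split. apply exp_pos.
  intros t Ht. rewrite gf_eq, <- exp_plus. apply exp_le'.
  assert (H0 := ln_ge0 t Ht).
  assert (H1 : (s - 1) * ln t <= c * ln t).
  { apply Rmult_le_compat_r; auto. apply Rle_abs. }
  assert (H2 : ln t <= ln m + t / m - 1).
  { pose proof (exp_ineq1_le (ln (t / m))). rewrite exp_ln in H by (apply Rdiv_lt_0_compat; lra).
    rewrite ln_div in H by lra. lra. }
  assert (H3 : c * (t / m) <= t / 2).
  { unfold Rdiv. rewrite <- Rmult_assoc.
    apply Rmult_le_reg_r with m; auto.
    rewrite Rmult_assoc, Rinv_l, Rmult_1_r by lra.
    unfold m. nra. }
  assert (H4 : c * ln t <= c * (ln m + t / m - 1)) by (apply Rmult_le_compat_l; auto).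
  nra.
Qed.

Lemma head_int s a : 0 < s -> 0 < a -> a <= 1 -> RInt (gf s) a 1 <= / s.
Proof.
  intros Hs Ha Ha1.
  assert (Hd : is_RInt (fun t => Rpower t (s - 1)) a 1
                 (minus (exp (s * ln 1) / s) (exp (s * ln a) / s))).
  { apply (is_RInt_derive (V:=R_CompleteNormedModule) (fun t => exp (s * ln t) / s)).
    - intros x Hx. assert (0 < x).
      { destruct Hx as [Hx _]. eapply Rlt_le_trans; [|exact Hx]. unfold Rmin; destruct Rle_dec; lra. }
      auto_derive. auto. unfold Rpower. rewrite pow_m1 by auto. field. split; lra.
    - intros x Hx. assert (0 < x).
      { destruct Hx as [Hx _]. eapply Rlt_le_trans; [|exact Hx]. unfold Rmin; destruct Rle_dec; lra. }
      apply (ex_derive_continuous (K:=R_AbsRing) (V:=R_NormedModule)).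
      unfold Rpower. auto_derive. auto. }
  apply (is_RInt_unique (V:=R_CompleteNormedModule)) in Hd. unfold minus, plus, opp in Hd; simpl in Hd.
  eapply Rle_trans.
  apply RInt_le with (g := fun t => Rpower t (s - 1)). lra.
  apply ex_RInt_pos; [apply gf_cont|lra|lra].
  apply ex_RInt_pos; [|lra|lra]. intros t Ht. unfold Rpower.
  apply (ex_derive_continuous (K:=R_AbsRing) (V:=R_NormedModule)). auto_derive. auto.
  intros x Hx. unfold gf. rewrite <- (Rmult_1_r (Rpower x (s - 1))) at 2.
  apply Rmult_le_compat_l. unfold Rpower; left; apply exp_pos.
  rewrite <- exp_0. apply exp_le'. lra.
  rewrite Hd. rewrite ln_1, Rmult_0_r, exp_0.
  assert (0 < exp (s * ln a) / s) by (apply Rdiv_lt_0_compat; auto; apply exp_pos).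
  unfold Rdiv in *. lra.
Qed.

Lemma tail_int s K b : 0 < K -> (forall t, 1 <= t -> gf s t <= K * exp (- t / 2)) ->
  1 <= b -> RInt (gf s) 1 b <= 2 * K.
Proof.
  intros HK Hb Hb1.
  assert (Hd : is_RInt (fun t => K * exp (- t / 2)) 1 b
                 (minus (- 2 * K * exp (- b / 2)) (- 2 * K * exp (- 1 / 2)))).
  { apply (is_RInt_derive (V:=R_CompleteNormedModule) (fun t => - 2 * K * exp (- t / 2))).
    - intros x Hx. auto_derive. auto. change RinvImpl.Rinv with Rinv. replace (- x * / 2) with (- x / 2) by (unfold Rdiv; ring). field.
    - intros x Hx.
      apply (ex_derive_continuous (K:=R_AbsRing) (V:=R_NormedModule)). auto_derive. auto. }
  apply (is_RInt_unique (V:=R_CompleteNormedModule)) in Hd. unfold minus, plus, opp in Hd; simpl in Hd.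
  eapply Rle_trans.
  apply RInt_le with (g := fun t => K * exp (- t / 2)). lra.
  apply ex_RInt_pos; [apply gf_cont|lra|lra].
  apply ex_RInt_pos; [|lra|lra]. intros t Ht.
  apply (ex_derive_continuous (K:=R_AbsRing) (V:=R_NormedModule)). auto_derive. auto.
  intros x Hx. apply Hb. lra.
  rewrite Hd.
  assert (0 < exp (- b / 2)) by apply exp_pos.
  assert (exp (- 1 / 2) <= 1) by (rewrite <- exp_0; apply exp_le'; lra).
  nra.
Qed.

Lemma gf_bounded s : 0 < s -> exists M, forall n, RInt (gf s) (an n) (bn n) <= M.
Proof.
  intros Hs. destruct (tail_bound s) as [K [HK HKb]].
  exists (/ s + 2 * K). intros n.
  pose proof (an_pos n); pose proof (an_le1 n); pose proof (bn_ge1 n).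
  rewrite <- (RInt_Chasles (V:=R_CompleteNormedModule) (gf s) (an n) 1 (bn n)).
  change plus with Rplus. simpl.
  pose proof (head_int s (an n) Hs H H0). pose proof (tail_int s K (bn n) HK HKb H1). lra.
  apply ex_RInt_pos; [apply gf_cont|lra|lra].
  apply ex_RInt_pos; [apply gf_cont|lra|lra].
Qed.



Lemma Gamma_lim s : 0 < s ->
  Gamma s = real (Lim_seq (fun n => RInt (gf s) (an n) (bn n))) /\
  (forall n, RInt (gf s) (an n) (bn n) <= Gamma s) /\
  is_lim_seq (fun n => RInt (gf s) (an n) (bn n)) (Gamma s).
Proof.
  intros Hs. destruct (gf_bounded s Hs) as [M HM].
  destruct (gen_limit (gf s) M (gf_cont s) (fun t _ => Rlt_le _ _ (gf_pos s t)) HM) as [H1 [H2 H3]].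
  assert (E : Gamma s = real (Lim_seq (fun n => RInt (gf s) (an n) (bn n)))).
  { unfold Gamma. change (fun t => Rpower t (s - 1) * exp (- t)) with (gf s).
    exact (is_RInt_gen_unique (V:=R_CompleteNormedModule) _ _ H1). }
  split; auto. rewrite E; split; auto.
Qed.

Lemma Gamma_pos s : 0 < s -> 0 < Gamma s.
Proof.
  intros Hs. destruct (Gamma_lim s Hs) as [_ [H _]].
  eapply Rlt_le_trans; [|apply (H 1%nat)].
  assert (an 1 < bn 1) by (unfold an, bn; apply exp_increasing; simpl; lra).
  apply RInt_gt_0; auto. intros; apply gf_pos.
  intros x Hx. apply gf_cont. pose proof (an_pos 1). lra.
Qed.

Lemma lim_inv c : 0 < c -> is_lim_seq (fun n => / (1 + c * INR n)) 0.
Proof.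
  intros Hc.
  assert (H : is_lim_seq (fun n => 1 + c * INR n) p_infty).
  { apply is_lim_seq_spec. intros M. destruct (INR_unbounded (M / c)) as [N HN].
    exists N. intros n Hn. apply le_INR in Hn.
    assert (M / c * c = M) by (field; lra).
    assert (M / c * c < INR n * c) by (apply Rmult_lt_compat_r; lra). nra. }
  apply is_lim_seq_inv in H; [|discriminate]. exact H.
Qed.

Lemma squeeze0 (v : nat -> R) C c : 0 < c ->
  (forall n, - (C * / (1 + c * INR n)) <= v n <= 0) -> is_lim_seq v 0.
Proof.
  intros Hc Hv.
  apply is_lim_seq_le_le with (u := fun n => - (C * / (1 + c * INR n))) (w := fun _ => 0); auto.
  replace (Finite 0) with (Rbar_opp (Rbar_mult C 0)) by (simpl; f_equal; ring).
  apply -> is_lim_seq_opp. apply is_lim_seq_scal_l. apply lim_inv; auto.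
  apply is_lim_seq_const.
Qed.

Lemma Gamma_succ s : 0 < s -> Gamma (s + 1) = s * Gamma s.
Proof.
  intros Hs.
  destruct (Gamma_lim s Hs) as [E1 [_ E1']].
  destruct (Gamma_lim (s + 1) ltac:(lra)) as [E2 _].
  set (H := fun t => - (exp (s * ln t) * exp (- t))).
  assert (Hint : forall n, RInt (gf (s + 1)) (an n) (bn n) =
             H (bn n) - H (an n) + s * RInt (gf s) (an n) (bn n)).
  { intros n. pose proof (an_pos n). pose proof (an_le1 n). pose proof (bn_ge1 n).
    apply (is_RInt_unique (V:=R_CompleteNormedModule)).
    assert (Hd : is_RInt (fun t => gf (s + 1) t - s * gf s t) (an n) (bn n)
                   (minus (H (bn n)) (H (an n)))).
    { apply (is_RInt_derive (V:=R_CompleteNormedModule) H).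
      - intros x Hx. assert (0 < x).
        { destruct Hx as [Hx _]. eapply Rlt_le_trans; [|exact Hx]. unfold Rmin; destruct Rle_dec; lra. }
        unfold H. auto_derive. auto.
        change RinvImpl.Rinv with Rinv.
        unfold gf, Rpower. replace (s + 1 - 1) with s by ring. rewrite pow_m1 by auto.
        field. lra.
      - intros x Hx. assert (0 < x).
        { destruct Hx as [Hx _]. eapply Rlt_le_trans; [|exact Hx]. unfold Rmin; destruct Rle_dec; lra. }
        apply (ex_derive_continuous (K:=R_AbsRing) (V:=R_NormedModule)).
        unfold gf, Rpower. auto_derive. lra. }
    assert (Hs2 := is_RInt_scal (V:=R_NormedModule) (gf s) (an n) (bn n) s _
                     (RInt_correct (V:=R_CompleteNormedModule) _ _ _
                       (ex_RInt_pos (gf s) (an n) (bn n) (gf_cont s) H0 ltac:(lra)))).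
    assert (Hp := is_RInt_plus (V:=R_NormedModule) _ _ _ _ _ _ Hd Hs2).
    eapply is_RInt_ext; [|exact Hp].
    intros x _. change plus with Rplus. change scal with Rmult. simpl. ring. }
  destruct (tail_bound (s + 1)) as [K [HK HKb]].
  assert (LA : is_lim_seq (fun n => H (an n)) 0).
  { apply squeeze0 with 1 s; auto. intros n. unfold H, an. rewrite ln_exp.
    assert (A1 : 0 < exp (s * - INR n)) by apply exp_pos.
    assert (A2 : 0 < exp (- exp (- INR n))) by apply exp_pos.
    assert (A3 : exp (- exp (- INR n)) <= 1) by (rewrite <- exp_0; apply exp_le';
       pose proof (exp_pos (- INR n)); lra).
    assert (A4 : exp (s * - INR n) <= / (1 + s * INR n)).
    { replace (s * - INR n) with (- (s * INR n)) by ring. rewrite exp_Ropp.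
      apply Rinv_le_contravar. pose proof (pos_INR n); nra. apply exp_ineq1_le. }
    split; [|nra]. rewrite Rmult_1_l.
    apply Ropp_le_contravar. nra. }
  assert (LB : is_lim_seq (fun n => H (bn n)) 0).
  { apply squeeze0 with K (/ 2); [lra|]. intros n.
    pose proof (bn_ge1 n) as B1.
    assert (B2 : exp (s * ln (bn n)) * exp (- bn n) <= K * exp (- bn n / 2)).
    { pose proof (HKb (bn n) B1) as X. unfold gf, Rpower in X.
      replace (s + 1 - 1) with s in X by ring. exact X. }
    assert (B3 : exp (- bn n / 2) <= / (1 + / 2 * INR n)).
    { replace (- bn n / 2) with (- (bn n / 2)) by field. rewrite exp_Ropp.
      apply Rinv_le_contravar. pose proof (pos_INR n); nra.
      pose proof (exp_ineq1_le (bn n / 2)). pose proof (exp_ineq1_le (INR n)).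
      unfold bn in *. lra. }
    assert (0 < exp (s * ln (bn n)) * exp (- bn n)) by (apply Rmult_lt_0_compat; apply exp_pos).
    unfold H. split; [|lra]. apply Ropp_le_contravar.
    eapply Rle_trans; [exact B2|]. apply Rmult_le_compat_l; lra. }
  assert (L : is_lim_seq (fun n => RInt (gf (s + 1)) (an n) (bn n)) (0 - 0 + s * Gamma s)).
  { eapply is_lim_seq_ext. intros n; symmetry; apply Hint.
    apply is_lim_seq_plus'. apply is_lim_seq_minus'; auto.
    apply is_lim_seq_scal_l with (lu := Finite (Gamma s)). exact E1'. }
  rewrite E2, (is_lim_seq_unique _ _ L). simpl. ring.
Qed.

Lemma series_lim a : ex_series a -> is_lim_seq (fun n => sum_f_R0 a n) (Series a).
Proof.
  intros H. apply Series_correct in H.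
  eapply is_lim_seq_ext. intros n. apply sum_n_Reals. exact H.
Qed.

Lemma series_pos a z : (forall k, 0 < a k) -> 0 < z -> ex_series (fun k => a k * z ^ k) ->
  0 < Series (fun k => a k * z ^ k).
Proof.
  intros Ha Hz Hex. apply series_lim in Hex.
  assert (Hi : forall n, sum_f_R0 (fun k => a k * z ^ k) n <= sum_f_R0 (fun k => a k * z ^ k) (S n)).
  { intros n. rewrite tech5. pose proof (Ha (S n)). pose proof (pow_lt z (S n) Hz).
    pose proof (Rmult_lt_0_compat _ _ H H0). lra. }
  pose proof (is_lim_seq_incr_compare _ _ Hex Hi 0%nat). simpl in H.
  pose proof (Ha 0%nat). lra.
Qed.

Lemma sum_zero n : sum_f_R0 (fun _ => 0) n = 0.
Proof. induction n; simpl; auto. rewrite IHn; ring. Qed.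

Lemma T_identity (a b : nat -> R) z w a' b' z' w' m :
  sum_f_R0 (fun i => (a' * b i - a i * b') * (w' * z ^ i - z' * w ^ i)) m =
  a' * w' * sum_f_R0 (fun k => b k * z ^ k) m + b' * z' * sum_f_R0 (fun k => a k * w ^ k) m
  - a' * z' * sum_f_R0 (fun k => b k * w ^ k) m - b' * w' * sum_f_R0 (fun k => a k * z ^ k) m.
Proof. induction m; simpl. ring. rewrite IHm. ring. Qed.

Lemma ratio_mono (a b : nat -> R) z w : 0 < z -> z < w ->
  (forall k, 0 < a k) -> (forall k, 0 < b k) ->
  (forall k, a k * b (S k) < a (S k) * b k) ->
  ex_series (fun k => a k * z ^ k) -> ex_series (fun k => a k * w ^ k) ->
  ex_series (fun k => b k * z ^ k) -> ex_series (fun k => b k * w ^ k) ->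
  Series (fun k => a k * z ^ k) / Series (fun k => b k * z ^ k) <
  Series (fun k => a k * w ^ k) / Series (fun k => b k * w ^ k).
Proof.
  intros Hz Hzw Ha Hb Hab Eaz Eaw Ebz Ebw.
  set (r := fun k => a k / b k).
  assert (Hr : forall k, r k < r (S k)).
  { intros k. unfold r. pose proof (Ha k); pose proof (Hb k); pose proof (Hb (S k)).
    pose proof (Hab k).
    apply Rmult_lt_reg_r with (b k * b (S k)). nra.
    replace (a k / b k * (b k * b (S k))) with (a k * b (S k)) by (field; lra).
    replace (a (S k) / b (S k) * (b k * b (S k))) with (a (S k) * b k) by (field; lra). lra. }
  assert (Hrle : forall i j, (i <= j)%nat -> r i <= r j).
  { intros i j Hij. induction Hij. lra. pose proof (Hr m). lra. }
  assert (Hcross : forall i j, (i <= j)%nat -> a i * b j <= a j * b i).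
  { intros i j Hij. pose proof (Hrle i j Hij). unfold r in H.
    pose proof (Hb i); pose proof (Hb j).
    apply Rmult_le_compat_r with (r := b i * b j) in H; [|nra].
    replace (a i / b i * (b i * b j)) with (a i * b j) in H by (field; lra).
    replace (a j / b j * (b i * b j)) with (a j * b i) in H by (field; lra). lra. }
  set (F := fun (c : nat -> R) (x : R) n => sum_f_R0 (fun k => c k * x ^ k) n).
  set (D := fun n => F a w n * F b z n - F a z n * F b w n).
  assert (Hstep : forall n, D n <= D (S n)).
  { intros n.
    set (T := sum_f_R0 (fun i => (a (S n) * b i - a i * b (S n)) * (w ^ (S n) * z ^ i - z ^ (S n) * w ^ i)) n).
    assert (HT : 0 <= T).
    { unfold T. rewrite <- (sum_zero n). apply sum_Rle. intros i Hi.
      apply Rmult_le_pos. pose proof (Hcross i (S n) ltac:(lia)). lra.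
      set (d := (S n - i)%nat). replace (S n) with (i + d)%nat by (unfold d; lia). rewrite !pow_add.
      assert (z ^ d <= w ^ d) by (apply pow_incr; lra).
      pose proof (pow_lt z i Hz). pose proof (pow_lt w i ltac:(lra)).
      replace (w ^ i * w ^ d * z ^ i - z ^ i * z ^ d * w ^ i) with (w ^ i * z ^ i * (w ^ d - z ^ d)) by ring.
      apply Rmult_le_pos; [|lra]. apply Rmult_le_pos; lra. }
    unfold T in HT. rewrite T_identity in HT.
    assert (E : D (S n) - D n = a (S n) * w ^ S n * sum_f_R0 (fun k : nat => b k * z ^ k) n +
      b (S n) * z ^ S n * sum_f_R0 (fun k : nat => a k * w ^ k) n -
      a (S n) * z ^ S n * sum_f_R0 (fun k : nat => b k * w ^ k) n -
      b (S n) * w ^ S n * sum_f_R0 (fun k : nat => a k * z ^ k) n).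
    { unfold D, F. rewrite !tech5. ring. }
    lra. }
  assert (H1 : 0 < D 1%nat).
  { unfold D, F. simpl. pose proof (Hab 0%nat). nra. }
  assert (Hge : forall n, D 1%nat <= D (S n)).
  { induction n. lra. pose proof (Hstep (S n)). lra. }
  assert (L : is_lim_seq (fun n => D (S n))
    (Series (fun k => a k * w ^ k) * Series (fun k => b k * z ^ k)
     - Series (fun k => a k * z ^ k) * Series (fun k => b k * w ^ k))).
  { apply -> (is_lim_seq_incr_1 D). unfold D, F.
    apply is_lim_seq_minus'; apply is_lim_seq_mult'; apply series_lim; auto. }
  pose proof (is_lim_seq_le (fun _ => D 1%nat) _ _ _ Hge (is_lim_seq_const _) L) as HL.
  simpl in HL.
  pose proof (series_pos b z Hb Hz Ebz). pose proof (series_pos b w Hb ltac:(lra) Ebw).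
  set (Az := Series (fun k => a k * z ^ k)) in *.
  set (Aw := Series (fun k => a k * w ^ k)) in *.
  set (Bz := Series (fun k => b k * z ^ k)) in *.
  set (Bw := Series (fun k => b k * w ^ k)) in *.
  apply Rmult_lt_reg_r with (Bz * Bw). nra.
  replace (Az / Bz * (Bz * Bw)) with (Az * Bw) by (field; lra).
  replace (Aw / Bw * (Bz * Bw)) with (Aw * Bz) by (field; lra). lra.
Qed.
Definition coef (p q : R) (k : nat) := / (Gamma (INR k + p) * Gamma (INR k + q)).

Lemma coef_pos p q k : 0 < p -> 0 < q -> 0 < coef p q k.
Proof.
  intros Hp Hq. pose proof (pos_INR k). unfold coef. apply Rinv_0_lt_compat.
  apply Rmult_lt_0_compat; apply Gamma_pos; lra.
Qed.

Lemma coef_S p q k : 0 < p -> 0 < q ->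
  coef p q (S k) = coef p q k / ((INR k + p) * (INR k + q)).
Proof.
  intros Hp Hq. pose proof (pos_INR k). unfold coef. rewrite S_INR.
  replace (INR k + 1 + p) with ((INR k + p) + 1) by ring.
  replace (INR k + 1 + q) with ((INR k + q) + 1) by ring.
  rewrite !Gamma_succ by lra.
  pose proof (Gamma_pos (INR k + p) ltac:(lra)). pose proof (Gamma_pos (INR k + q) ltac:(lra)).
  field. repeat split; lra.
Qed.

Lemma coef_ex p q z : 0 < p -> 0 < q -> 0 < z -> ex_series (fun k => coef p q k * z ^ k).
Proof.
  intros Hp Hq Hz. apply ex_series_Rabs.
  apply ex_series_DAlembert with 0. lra.
  intros n. pose proof (coef_pos p q n Hp Hq). pose proof (pow_lt z n Hz). nra.
  eapply is_lim_seq_ext with (u := fun n => z * / ((INR n + p) * (INR n + q))).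
  { intros n. pose proof (coef_pos p q n Hp Hq). pose proof (pow_lt z n Hz). pose proof (pos_INR n).
    rewrite coef_S by auto. simpl pow. rewrite Rabs_pos_eq.
    field. repeat split; lra.
    apply Rmult_le_pos. apply Rmult_le_pos. apply Rmult_le_pos; [lra|].
    apply Rlt_le, Rinv_0_lt_compat; nra. nra.
    apply Rlt_le, Rinv_0_lt_compat. nra. }
  replace (Finite 0) with (Rbar_mult z 0) by (simpl; f_equal; ring).
  apply is_lim_seq_scal_l.
  replace (Finite 0) with (Rbar_inv p_infty) by reflexivity.
  apply is_lim_seq_inv; [|discriminate].
  apply is_lim_seq_spec. intros M. destruct (INR_unbounded (M / q)) as [N HN].
  exists N. intros n Hn. apply le_INR in Hn.
  assert (M / q * q = M) by (field; lra).
  assert (M / q * q < INR n * q) by (apply Rmult_lt_compat_r; lra).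
  pose proof (pos_INR n). nra.
Qed.

Lemma Rpower_split x c k : 0 < x ->
  Rpower (x / 2) (c + 2 * INR k) = Rpower (x / 2) c * ((x / 2) ^ 2) ^ k.
Proof.
  intros Hx. rewrite Rpower_plus. f_equal.
  rewrite <- pow_mult. rewrite <- Rpower_pow by lra. f_equal.
  rewrite mult_INR. simpl. ring.
Qed.

Lemma struve_eq mu x : 0 < x ->
  struve_L mu x = Rpower (x / 2) (mu + 1) *
    Series (fun k => coef (3 / 2) (mu + 3 / 2) k * ((x / 2) ^ 2) ^ k).
Proof.
  intros Hx. unfold struve_L. rewrite <- Series_scal_l. apply Series_ext. intros k.
  replace (2 * INR k + mu + 1) with ((mu + 1) + 2 * INR k) by ring.
  rewrite Rpower_split by auto. unfold coef.
  replace (INR k + mu + 3 / 2) with (INR k + (mu + 3 / 2)) by ring.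
  unfold Rdiv at 1. ring.
Qed.

Lemma lommel_eq mu nu x : 0 < x ->
  lommel_t mu nu x = Rpower (x / 2) (mu + 1) *
    Series (fun k => coef ((mu - nu + 3) / 2) ((mu + nu + 3) / 2) k * ((x / 2) ^ 2) ^ k).
Proof.
  intros Hx. unfold lommel_t. rewrite <- Series_scal_l. apply Series_ext. intros k.
  replace (mu + 2 * INR k + 1) with ((mu + 1) + 2 * INR k) by ring.
  rewrite Rpower_split by auto. unfold coef.
  unfold Rdiv at 1. ring.
Qed.

Lemma coef_cross p1 q1 p2 q2 : 0 < p1 -> 0 < q1 -> 0 < p2 -> 0 < q2 ->
  (forall k, (INR k + p1) * (INR k + q1) < (INR k + p2) * (INR k + q2)) ->
  forall k, coef p1 q1 k * coef p2 q2 (S k) < coef p1 q1 (S k) * coef p2 q2 k.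
Proof.
  intros H1 H2 H3 H4 H k. rewrite !coef_S by auto.
  pose proof (coef_pos p1 q1 k H1 H2). pose proof (coef_pos p2 q2 k H3 H4).
  pose proof (pos_INR k). specialize (H k).
  assert (0 < (INR k + p1) * (INR k + q1)) by nra.
  assert (/ ((INR k + p2) * (INR k + q2)) < / ((INR k + p1) * (INR k + q1)))
    by (apply Rinv_lt_contravar; nra).
  unfold Rdiv.
  replace (coef p1 q1 k * (coef p2 q2 k * / ((INR k + p2) * (INR k + q2)))) with
    ((coef p1 q1 k * coef p2 q2 k) * / ((INR k + p2) * (INR k + q2))) by ring.
  replace (coef p1 q1 k * / ((INR k + p1) * (INR k + q1)) * coef p2 q2 k) with
    ((coef p1 q1 k * coef p2 q2 k) * / ((INR k + p1) * (INR k + q1))) by ring.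
  apply Rmult_lt_compat_l; auto. nra.
Qed.

Lemma Rabs_sq x : Rabs x * Rabs x = x * x.
Proof. unfold Rabs; destruct Rcase_abs; ring. Qed.

Theorem theorem3p2 (mu nu : R) :
  mu > - (3 / 2) ->
  (Rabs mu > Rabs nu ->
     forall x y : R, 0 < x -> x < y ->
       struve_L mu x / lommel_t mu nu x < struve_L mu y / lommel_t mu nu y) /\
  (Rabs mu < Rabs nu < mu + 3 ->
     forall x y : R, 0 < x -> x < y ->
       struve_L mu y / lommel_t mu nu y < struve_L mu x / lommel_t mu nu x).
Proof.
  intros Hmu.
  set (a := coef (3 / 2) (mu + 3 / 2)).
  set (b := coef ((mu - nu + 3) / 2) ((mu + nu + 3) / 2)).
  assert (Hdiff : forall k, (INR k + (mu - nu + 3) / 2) * (INR k + (mu + nu + 3) / 2)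
     - (INR k + 3 / 2) * (INR k + (mu + 3 / 2)) = (mu * mu - nu * nu) / 4)
    by (intros; field).
  assert (Hz : forall x, 0 < x -> 0 < (x / 2) ^ 2) by (intros; apply pow_lt; lra).
  assert (Hzz : forall x y, 0 < x -> x < y -> (x / 2) ^ 2 < (y / 2) ^ 2) by (intros; simpl; nra).
  assert (Ha : forall k, 0 < a k) by (intros; apply coef_pos; lra).
  assert (Hpos : 0 < (mu - nu + 3) / 2 -> 0 < (mu + nu + 3) / 2 ->
    (forall k, 0 < b k) /\ (forall x, 0 < x -> struve_L mu x / lommel_t mu nu x =
     Series (fun k => a k * ((x / 2) ^ 2) ^ k) / Series (fun k => b k * ((x / 2) ^ 2) ^ k))).
  { intros Hal Hbe.
    assert (Hb : forall k, 0 < b k) by (intros; apply coef_pos; lra).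
    split; auto.
    intros x Hx. rewrite struve_eq, lommel_eq by auto.
    assert (0 < Rpower (x / 2) (mu + 1)) by (unfold Rpower; apply exp_pos).
    pose proof (series_pos b _ Hb (Hz x Hx) (coef_ex _ _ _ Hal Hbe (Hz x Hx))).
    unfold a, b in *. field. split; lra. }
  pose proof (Rabs_sq mu). pose proof (Rabs_sq nu).
  pose proof (Rabs_pos mu). pose proof (Rabs_pos nu).
  split.
  - intros Hmn.
    assert (Hal : 0 < (mu - nu + 3) / 2) by (unfold Rabs in *; destruct (Rcase_abs mu), (Rcase_abs nu); lra).
    assert (Hbe : 0 < (mu + nu + 3) / 2) by (unfold Rabs in *; destruct (Rcase_abs mu), (Rcase_abs nu); lra).
    destruct (Hpos Hal Hbe) as [Hb Hred].
    intros x y Hx Hxy. rewrite !Hred by lra.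
    apply ratio_mono; auto.
    + apply coef_cross; try lra. intros k. pose proof (Hdiff k). nra.
    + apply coef_ex; auto; lra.
    + apply coef_ex; auto; try lra. apply Hz; lra.
    + apply coef_ex; auto; lra.
    + apply coef_ex; auto; try lra. apply Hz; lra.
  - intros [Hmn Hn3].
    assert (Hal : 0 < (mu - nu + 3) / 2) by (unfold Rabs in *; destruct (Rcase_abs mu), (Rcase_abs nu); lra).
    assert (Hbe : 0 < (mu + nu + 3) / 2) by (unfold Rabs in *; destruct (Rcase_abs mu), (Rcase_abs nu); lra).
    destruct (Hpos Hal Hbe) as [Hb Hred].
    intros x y Hx Hxy. rewrite !Hred by lra.
    assert (Hm : Series (fun k => b k * ((x / 2) ^ 2) ^ k) / Series (fun k => a k * ((x / 2) ^ 2) ^ k) <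
                 Series (fun k => b k * ((y / 2) ^ 2) ^ k) / Series (fun k => a k * ((y / 2) ^ 2) ^ k)).
    { apply ratio_mono; auto.
      + apply coef_cross; try lra. intros k. pose proof (Hdiff k). nra.
      + apply coef_ex; auto; lra.
      + apply coef_ex; auto; try lra. apply Hz; lra.
      + apply coef_ex; auto; lra.
      + apply coef_ex; auto; try lra. apply Hz; lra. }
    assert (Hy : 0 < y) by lra.
    pose proof (series_pos a _ Ha (Hz x Hx) (coef_ex (3 / 2) (mu + 3 / 2) _ ltac:(lra) ltac:(lra) (Hz x Hx))).
    pose proof (series_pos a _ Ha (Hz y Hy) (coef_ex (3 / 2) (mu + 3 / 2) _ ltac:(lra) ltac:(lra) (Hz y Hy))).
    pose proof (series_pos b _ Hb (Hz x Hx) (coef_ex _ _ _ Hal Hbe (Hz x Hx))).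
    pose proof (series_pos b _ Hb (Hz y Hy) (coef_ex _ _ _ Hal Hbe (Hz y Hy))).
    revert Hm H3 H4 H5 H6.
    set (Ax := Series (fun k => a k * ((x / 2) ^ 2) ^ k)).
    set (Ay := Series (fun k => a k * ((y / 2) ^ 2) ^ k)).
    set (Bx := Series (fun k => b k * ((x / 2) ^ 2) ^ k)).
    set (By := Series (fun k => b k * ((y / 2) ^ 2) ^ k)).
    intros Hm H3 H4 H5 H6.
    apply Rmult_lt_reg_r with (Bx * By). nra.
    apply Rmult_lt_compat_r with (r := Ax * Ay) in Hm; [|nra].
    replace (Bx / Ax * (Ax * Ay)) with (Bx * Ay) in Hm by (field; lra).
    replace (By / Ay * (Ax * Ay)) with (By * Ax) in Hm by (field; lra).
    replace (Ay / By * (Bx * By)) with (Ay * Bx) by (field; lra).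
    replace (Ax / Bx * (Bx * By)) with (Ax * By) by (field; lra). lra.
Qed.
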